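(* Let $(\mathcal W,\rhd)$ be a well-founded frame. If $A\cong B$, then $\mathcal I[A]^\eta_p=\mathcal I[B]^\eta_p$ for every hereditary type environment $\eta$ and every $p\in\mathcal W$.
   Context: Type expressions: fix a countably infinite set of type variables $X,Y,Z,\dots$. Pseudo type expressions are generated by $A::=X\mid A\to A\mid \bullet A\mid \mu X.A$ ($\mu$ binds $X$; $\alpha$-convertible expressions are identified; $\to$ associates to the right; $\bullet$ binds tighter than $\to$, which binds tighter than $\mu$). $A[B/X]$ denotes capture-avoiding substitution. $\top$ abbreviates $\mu X.\bullet X$, and $\bullet^n A$ denotes $A$ prefixed by $n$ copies of $\bullet$. The tail $t(A)$ is defined by $t(X)=X$, $t(A\to B)=t(B)$, $t(\bullet A)=\bullet t(A)$, $t(\mu X.A)=\mu X.t(A)$; it always has the form $\bullet^{m_0}\mu X_1.\bullet^{m_1}\mu X_2.\cdots\mu X_n.\bullet^{m_n}Y$. $A$ is a $\top$-variant iff $Y=X_i$ for some $1\le i\le n$ with $X_i\notin\{X_{i+1},\dots,X_n\}$ and $m_i+\dots+m_n\ge 1$. $A$ is proper in $X$ iff: a variable $Y$ is proper in $X$ iff $Y\neq X$; $\bullet A$ is always proper in $X$; $A\to B$ is proper in $X$ iff both $A,B$ are proper in $X$ or $B$ is a $\top$-variant; for $Y\ne X$, $\mu Y.A$ is proper in $X$ iff $A$ is proper in $X$ or $\mu Y.A$ is a $\top$-variant. Type expressions are the least set of pseudo type expressions containing all type variables, closed under $\to$ and $\bullet$, and containing $\mu X.A$ whenever it contains $A$ and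 $A$ is proper in $X$. Equality: $\cong$ is the least relation on type expressions such that: $A\cong A$; $A\cong B$ implies $B\cong A$; $A\cong B$ and $B\cong C$ imply $A\cong C$; $A\cong B$ implies $\bullet A\cong\bullet B$; $A\cong C$ and $B\cong D$ imply $A\to B\cong C\to D$; $A\to\top\cong\top$; $\mu X.A\cong A[\mu X.A/X]$; and if $A\cong C[A/X]$ with $C$ proper in $X$, then $A\cong\mu X.C$. $\simeq$ is the least relation satisfying the same closure conditions and additionally $\bullet(A\to B)\simeq\bullet A\to\bullet B$. Semantics: a syntactical $\lambda$-algebra $(\mathcal V,\cdot,[\![-]\!])$ consists of a nonempty set $\mathcal V$, a map $\cdot:\mathcal V\times\mathcal V\to\mathcal V$, and values $[\![M]\!]_\rho\in\mathcal V$ for untyped $\lambda$-terms $M$ and maps $\rho$ from individual variables to $\mathcal V$, such that $[\![x]\!]_\rho=\rho(x)$, $[\![MN]\!]_\rho=[\![M]\!]_\rho\cdot[\![N]\!]_\rho$, $[\![\lambda x.M]\!]_\rho\cdot v=[\![M]\!]_{\rho[v/x]}$, $[\![M]\!]_\rho$ depends only on $\rho$ restricted to free variables of $M$, and $M=_\beta N$ implies $[\![M]\!]_\rho=[\![N]\!]_\rho$; fix one. A well-founded frame is a pair $(\mathcal W,\rhd)$ with $\mathcal W$ nonempty and $\rhd$ a binary relation on $\mathcal W$ admitting no infinite chain $p_0\rhd p_1\rhd p_2\rhd\cdots$; $\trianglerighteq$ denotes the reflexive-transitive closure of $\rhd$. A type environment $\eta$ assigns a set $\eta(X)_p\subseteq\mathcal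 V$ to each type variable $X$ and world $p$; it is hereditary if $p\rhd q$ implies $\eta(X)_p\subseteq\eta(X)_q$. For hereditary $\eta$, $\mathcal I[A]^\eta_p\subseteq\mathcal V$ is defined (by well-founded induction on $p$ and the syntactic rank of $A$) by: $\mathcal I[A]^\eta_p=\mathcal V$ if $A$ is a $\top$-variant; otherwise $\mathcal I[X]^\eta_p=\eta(X)_p$; $\mathcal I[\bullet A]^\eta_p=\{u\mid u\in\mathcal I[A]^\eta_q\text{ for all }q\text{ with }p\rhd q\}$; $\mathcal I[A\to B]^\eta_p=\{u\mid \text{for all }q\text{ with }p\trianglerighteq q\text{ and all }v\in\mathcal I[A]^\eta_q,\ u\cdot v\in\mathcal I[B]^\eta_q\}$; $\mathcal I[\mu X.A]^\eta_p=\mathcal I[A[\mu X.A/X]]^\eta_p$. *)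

(* Defs.v *)
(* Type expressions with de Bruijn indices (alpha-conversion
   is then syntactic identity). *)
From Stdlib Require Import Arith List Relations.
Import ListNotations.

Inductive ty : Type :=
| TVar   : nat -> ty
| TArr   : ty -> ty -> ty
| TLater : ty -> ty
| TMu    : ty -> ty.

Fixpoint lift (c : nat) (A : ty) : ty :=
  match A with
  | TVar n => if c <=? n then TVar (S n) else TVar n
  | TArr A1 A2 => TArr (lift c A1) (lift c A2)
  | TLater A1 => TLater (lift c A1)
  | TMu A1 => TMu (lift (S c) A1)
  end.

Fixpoint liftn (k : nat) (B : ty) : ty :=
  match k with 0 => B | S k' => lift 0 (liftn k' B) end.

(* capture-avoiding substitution of B for variable k (other free
   variables above k are decremented: the binder of k disappears) *)
Fixpoint subst_at (k : nat) (B : ty) (A : ty) : ty :=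
  match A with
  | TVar n => if n =? k then liftn k B
              else if k <? n then TVar (pred n) else TVar n
  | TArr A1 A2 => TArr (subst_at k B A1) (subst_at k B A2)
  | TLater A1 => TLater (subst_at k B A1)
  | TMu A1 => TMu (subst_at (S k) B A1)
  end.

(* A[B/X] where A is the body of a binder mu X. A (X = index 0) *)
Definition subst0 (B A : ty) : ty := subst_at 0 B A.

Definition Top : ty := TMu (TLater (TVar 0)).

Fixpoint tail (A : ty) : ty :=
  match A with
  | TVar n => TVar n
  | TArr _ B => tail B
  | TLater A1 => TLater (tail A1)
  | TMu A1 => TMu (tail A1)
  end.

(* On a tail  •^m0 mu X1. •^m1 ... mu Xn. •^mn Y :  ctx records, for each
   enclosing mu of the tail (innermost first), whether some • occurred
   between that binder and the current position.  Y = X_i with X_i not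
   among X_{i+1..n} means Y is the de Bruijn index of the i-th binder
   (innermost binder with that name), and m_i+...+m_n >= 1 means a •
   occurs after that binder. *)
Fixpoint tv_check (T : ty) (ctx : list bool) : bool :=
  match T with
  | TVar k => nth k ctx false
  | TArr _ B => tv_check B ctx
  | TLater A1 => tv_check A1 (map (fun _ => true) ctx)
  | TMu A1 => tv_check A1 (false :: ctx)
  end.

Definition top_variant (A : ty) : bool := tv_check (tail A) [].

Fixpoint proper (A : ty) (x : nat) : Prop :=
  match A with
  | TVar y => y <> x
  | TLater _ => True
  | TArr A1 A2 => (proper A1 x /\ proper A2 x) \/ top_variant A2 = true
  | TMu A1 => proper A1 (S x) \/ top_variant (TMu A1) = true
  end.

Inductive is_type : ty -> Prop :=
| is_type_var : forall n, is_type (TVar n)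
| is_type_arr : forall A B, is_type A -> is_type B -> is_type (TArr A B)
| is_type_later : forall A, is_type A -> is_type (TLater A)
| is_type_mu : forall A, is_type A -> proper A 0 -> is_type (TMu A).

Inductive ty_cong : ty -> ty -> Prop :=
| cong_refl : forall A, is_type A -> ty_cong A A
| cong_sym : forall A B, ty_cong A B -> ty_cong B A
| cong_trans : forall A B C, ty_cong A B -> ty_cong B C -> ty_cong A C
| cong_later : forall A B, ty_cong A B -> ty_cong (TLater A) (TLater B)
| cong_arr : forall A B C D, ty_cong A C -> ty_cong B D ->
    ty_cong (TArr A B) (TArr C D)
| cong_arr_top : forall A, is_type A -> ty_cong (TArr A Top) Top
| cong_unfold : forall A, is_type (TMu A) -> ty_cong (TMu A) (subst0 (TMu A) A)
| cong_fix : forall A C, is_type C -> proper C 0 ->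
    ty_cong A (subst0 A C) -> ty_cong A (TMu C).

Inductive lterm : Type :=
| LVar : nat -> lterm
| LApp : lterm -> lterm -> lterm
| LLam : lterm -> lterm.

Fixpoint llift (c : nat) (M : lterm) : lterm :=
  match M with
  | LVar n => if c <=? n then LVar (S n) else LVar n
  | LApp M1 M2 => LApp (llift c M1) (llift c M2)
  | LLam M1 => LLam (llift (S c) M1)
  end.

Fixpoint lliftn (k : nat) (N : lterm) : lterm :=
  match k with 0 => N | S k' => llift 0 (lliftn k' N) end.

Fixpoint lsubst_at (k : nat) (N : lterm) (M : lterm) : lterm :=
  match M with
  | LVar n => if n =? k then lliftn k N
              else if k <? n then LVar (pred n) else LVar n
  | LApp M1 M2 => LApp (lsubst_at k N M1) (lsubst_at k N M2)
  | LLam M1 => LLam (lsubst_at (S k) N M1)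
  end.

Inductive beta1 : lterm -> lterm -> Prop :=
| beta_redex : forall M N, beta1 (LApp (LLam M) N) (lsubst_at 0 N M)
| beta_appl : forall M M' N, beta1 M M' -> beta1 (LApp M N) (LApp M' N)
| beta_appr : forall M N N', beta1 N N' -> beta1 (LApp M N) (LApp M N')
| beta_lam : forall M M', beta1 M M' -> beta1 (LLam M) (LLam M').

Definition beta_eq : lterm -> lterm -> Prop := clos_refl_sym_trans lterm beta1.

Fixpoint lfree (x : nat) (M : lterm) : Prop :=
  match M with
  | LVar n => n = x
  | LApp M1 M2 => lfree x M1 \/ lfree x M2
  | LLam M1 => lfree (S x) M1
  end.

Definition scons {V : Type} (v : V) (rho : nat -> V) : nat -> V :=
  fun n => match n with 0 => v | S n' => rho n' end.

Record syntactical_lambda_algebra (V : Type) (app : V -> V -> V)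
    (den : lterm -> (nat -> V) -> V) : Prop := {
  sla_nonempty : inhabited V;
  sla_var : forall x rho, den (LVar x) rho = rho x;
  sla_app : forall M N rho, den (LApp M N) rho = app (den M rho) (den N rho);
  sla_lam : forall M rho v, app (den (LLam M) rho) v = den M (scons v rho);
  sla_fv : forall M rho rho', (forall x, lfree x M -> rho x = rho' x) ->
             den M rho = den M rho';
  sla_beta : forall M N rho, beta_eq M N -> den M rho = den N rho
}.

Definition well_founded_frame (W : Type) (R : W -> W -> Prop) : Prop :=
  inhabited W /\ ~ (exists f : nat -> W, forall n, R (f n) (f (S n))).

Definition tenv (W V : Type) := nat -> W -> V -> Prop.

Definition hereditary {W V : Type} (R : W -> W -> Prop) (eta : tenv W V) : Prop :=
  forall X p q, R p q -> forall u, eta X p u -> eta X q u.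

(* F satisfies the defining equations of I[A]^eta_p (for hereditary eta,
   type expressions A and worlds p).  Sets are compared extensionally. *)
Definition interp_spec {W V : Type} (R : W -> W -> Prop) (app : V -> V -> V)
    (F : tenv W V -> W -> ty -> V -> Prop) : Prop :=
  forall (eta : tenv W V), hereditary R eta -> forall (p : W) (A : ty),
    is_type A ->
    (top_variant A = true -> forall u, F eta p A u) /\
    (top_variant A = false ->
       match A with
       | TVar X => forall u, F eta p A u <-> eta X p u
       | TLater A1 => forall u, F eta p A u <-> (forall q, R p q -> F eta q A1 u)
       | TArr A1 A2 => forall u, F eta p A u <->
           (forall q, clos_refl_trans W R p q ->
              forall v, F eta q A1 v -> F eta q A2 (app u v))
       | TMu A1 => forall u, F eta p A u <-> F eta p (subst0 (TMu A1) A1) u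
       end).

(* Main.v *)
Require Import Defs.
From Stdlib Require Import Relations Arith Lia List.
Import ListNotations.

Lemma tv_tail : forall A ctx, tv_check (Defs.tail A) ctx = tv_check A ctx.
Proof. induction A; intros; simpl; auto. Qed.

Lemma top_variant_eq : forall A, top_variant A = tv_check A [].
Proof. intros; unfold top_variant; apply tv_tail. Qed.

Lemma tv_lift : forall T ctx c, tv_check (lift (c + length ctx) T) ctx = tv_check T ctx.
Proof.
  induction T; intros ctx c; simpl.
  - destruct (Nat.leb_spec (c + length ctx) n).
    + simpl. rewrite !nth_overflow by lia. reflexivity.
    + reflexivity.
  - apply IHT2.
  - rewrite <- (length_map (fun _ : bool => true) ctx). apply IHT.
  - replace (S (c + length ctx)) with (c + length (false :: ctx)) by (simpl; lia).
    apply IHT.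
Qed.

Lemma nth_true_lt : forall (ctx : list bool) n, nth n ctx false = true -> n < length ctx.
Proof.
  intros ctx n H. destruct (Nat.lt_ge_cases n (length ctx)); auto.
  rewrite nth_overflow in H by lia. discriminate.
Qed.

Lemma tv_subst : forall T ctx k B, tv_check T ctx = true ->
  tv_check (subst_at (k + length ctx) B T) ctx = true.
Proof.
  induction T; intros ctx k B H; simpl in *.
  - apply nth_true_lt in H as Hl.
    destruct (Nat.eqb_spec n (k + length ctx)); [lia|].
    destruct (Nat.ltb_spec (k + length ctx) n); [lia|]. simpl; auto.
  - apply IHT2; auto.
  - rewrite <- (length_map (fun _ : bool => true) ctx). apply IHT; auto.
  - replace (S (k + length ctx)) with (k + length (false :: ctx)) by (simpl; lia).
    apply IHT; auto.
Qed.

Lemma top_variant_subst : forall A k B, top_variant A = true -> top_variant (subst_at k B A) = true.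
Proof.
  intros. rewrite top_variant_eq in *.
  pose proof (tv_subst A [] k B H) as H1. simpl in H1. rewrite Nat.add_0_r in H1. exact H1.
Qed.

Lemma top_variant_lift : forall A c, top_variant (lift c A) = top_variant A.
Proof.
  intros. rewrite !top_variant_eq.
  pose proof (tv_lift A [] c) as H1. simpl in H1. rewrite Nat.add_0_r in H1. exact H1.
Qed.

Lemma proper_lift_self : forall C c, proper (lift c C) c.
Proof.
  induction C; intros c; simpl.
  - destruct (Nat.leb_spec c n); simpl; lia.
  - left; split; auto.
  - exact I.
  - left; auto.
Qed.

Lemma proper_lift_up : forall C c x, c <= x -> proper C x -> proper (lift c C) (S x).
Proof.
  induction C; intros c x Hc H; simpl in *.
  - destruct (Nat.leb_spec c n); simpl; lia.
  - destruct H as [[H1 H2]|H].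
    + left; split; auto.
    + right. rewrite top_variant_lift. auto.
  - exact I.
  - destruct H as [H|H].
    + left. apply IHC; auto; lia.
    + right. change (top_variant (lift c (TMu C)) = true). rewrite top_variant_lift; auto.
Qed.

Lemma proper_lift_low : forall C c x, x < c -> proper C x -> proper (lift c C) x.
Proof.
  induction C; intros c x Hc H; simpl in *.
  - destruct (Nat.leb_spec c n); simpl; lia.
  - destruct H as [[H1 H2]|H].
    + left; split; auto.
    + right. rewrite top_variant_lift. auto.
  - exact I.
  - destruct H as [H|H].
    + left. apply IHC; auto; lia.
    + right. change (top_variant (lift c (TMu C)) = true). rewrite top_variant_lift; auto.
Qed.

Lemma proper_liftn : forall k B x, x < k -> proper (liftn k B) x.
Proof.
  induction k; intros B x Hx; [lia|]. simpl.
  destruct x.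
  - apply proper_lift_self.
  - apply proper_lift_up; [lia|]. apply IHk; lia.
Qed.

Lemma proper_subst : forall A k B x, x < k -> proper A x -> proper (subst_at k B A) x.
Proof.
  induction A; intros k B x Hx H; simpl in *.
  - destruct (Nat.eqb_spec n k).
    + apply proper_liftn; auto.
    + destruct (Nat.ltb_spec k n); simpl; lia.
  - destruct H as [[H1 H2]|H].
    + left; split; auto.
    + right. apply top_variant_subst; auto.
  - exact I.
  - destruct H as [H|H].
    + left. apply IHA; auto; lia.
    + right. change (top_variant (subst_at k B (TMu A)) = true). apply top_variant_subst; auto.
Qed.

Lemma is_type_lift : forall A c, is_type A -> is_type (lift c A).
Proof.
  intros A c H; revert c; induction H; intros c; simpl.
  - destruct (c <=? n); constructor.
  - constructor; auto.
  - constructor; auto.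
  - constructor; auto. apply proper_lift_low; auto; lia.
Qed.

Lemma is_type_liftn : forall k B, is_type B -> is_type (liftn k B).
Proof. induction k; intros; simpl; auto. apply is_type_lift; auto. Qed.

Lemma is_type_subst : forall A k B, is_type A -> is_type B -> is_type (subst_at k B A).
Proof.
  intros A k B H; revert k; induction H; intros k HB; simpl.
  - destruct (n =? k). apply is_type_liftn; auto.
    destruct (k <? n); constructor.
  - constructor; auto.
  - constructor; auto.
  - constructor; auto. apply proper_subst; auto; lia.
Qed.

Fixpoint hm (A : ty) : nat :=
  match A with
  | TVar _ => 0
  | TLater _ => 0
  | TArr A1 A2 => if top_variant A2 then 0 else S (max (hm A1) (hm A2))
  | TMu A1 => if top_variant (TMu A1) then 0 else S (hm A1)
  end.

Lemma hm_subst : forall A k B, proper A k -> hm (subst_at k B A) <= hm A.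
Proof.
  induction A; intros k B H; simpl in *.
  - destruct (Nat.eqb_spec n k); [lia|]. destruct (k <? n); simpl; lia.
  - destruct (top_variant (subst_at k B A2)) eqn:E1; [lia|].
    destruct (top_variant A2) eqn:E2.
    + apply (top_variant_subst _ k B) in E2. congruence.
    + destruct H as [[H1 H2]|H]; [|congruence].
      specialize (IHA1 k B H1). specialize (IHA2 k B H2). lia.
  - lia.
  - destruct (top_variant (TMu (subst_at (S k) B A))) eqn:E1; [lia|].
    destruct (top_variant (TMu A)) eqn:E2.
    + apply (top_variant_subst _ k B) in E2. simpl in E2. congruence.
    + destruct H as [H|H]; [|congruence].
      specialize (IHA (S k) B H). lia.
Qed.

Lemma cong_types : forall A B, ty_cong A B -> is_type A /\ is_type B.
Proof.
  intros A B H; induction H; try tauto.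
  - split; constructor; tauto.
  - split; constructor; tauto.
  - split. constructor; auto. constructor; auto. constructor. constructor.
    simpl; exact I.
    constructor. constructor. constructor. simpl; exact I.
  - split; auto. unfold subst0. inversion H; subst. apply is_type_subst; auto.
  - split; [tauto|]. constructor; auto.
Qed.

From Stdlib Require Import Relations Arith Lia List Wellfounded Setoid.
From Stdlib Require Import Classical ClassicalEpsilon FunctionalExtensionality PropExtensionality.
Import ListNotations.

Section WF.
Variables (W : Type) (R : W -> W -> Prop).

Lemma frame_acc : well_founded_frame W R -> forall p, Acc (fun q p => R p q) p.
Proof.
  intros [_ Hn] p0. apply NNPP. intro H0.
  assert (step : forall x, ~ Acc (fun q p => R p q) x -> exists y, R x y /\ ~ Acc (fun q p => R p q) y).
  { intros x Hx. apply NNPP. intro Hc. apply Hx. constructor. intros y Hy.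
    apply NNPP. intro Hy'. apply Hc. exists y; auto. }
  set (P := fun x => ~ Acc (fun q p => R p q) x).
  assert (next : forall s : {x | P x}, {y | R (proj1_sig s) y /\ P y}).
  { intros [x Hx]. apply constructive_indefinite_description. apply step; auto. }
  set (g := fun s : {x | P x} => exist P (proj1_sig (next s)) (proj2 (proj2_sig (next s)))).
  apply Hn. exists (fun n => proj1_sig (Nat.iter n g (exist P p0 H0))).
  intro n. simpl. exact (proj1 (proj2_sig (next _))).
Qed.

Lemma frame_wf : well_founded_frame W R -> well_founded (fun q p => clos_trans W R p q).
Proof.
  intros Hf.
  apply (wf_incl _ _ (clos_trans W (fun q p => R p q))).
  - intros q p H. induction H.
    + apply t_step; auto.
    + eapply t_trans; eauto.
  - apply wf_clos_trans. intro p; apply frame_acc; auto.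
Qed.
End WF.

Section Sem.
Variables (W V : Type) (R : W -> W -> Prop) (app : V -> V -> V).
Hypothesis Hwf : well_founded (fun q p => clos_trans W R p q).

Notation crt := (clos_refl_trans W R).
Notation ct := (clos_trans W R).

Definition fixS (Phi : (W -> V -> Prop) -> (W -> V -> Prop)) : W -> V -> Prop :=
  epsilon (inhabits (fun (_:W) (_:V) => False)) (fun S => S = Phi S).

Fixpoint F0 (A : ty) (eta : tenv W V) : W -> V -> Prop :=
  match A with
  | TVar n => eta n
  | TArr A1 A2 => fun p u => forall q, clos_refl_trans W R p q ->
        forall v, F0 A1 eta q v -> F0 A2 eta q (app u v)
  | TLater A1 => fun p u => forall q, R p q -> F0 A1 eta q u
  | TMu A1 => fixS (fun S => F0 A1 (scons S eta))
  end.

Definition del (c : nat) (eta : tenv W V) : tenv W V :=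
  fun n => if n <? c then eta n else eta (S n).

Lemma F0_lift : forall A c eta, F0 (lift c A) eta = F0 A (del c eta).
Proof.
  induction A; intros c eta; simpl.
  - unfold del. destruct (Nat.leb_spec c n); destruct (Nat.ltb_spec n c); simpl; auto; lia.
  - rewrite IHA1, IHA2; auto.
  - rewrite IHA; auto.
  - f_equal. apply functional_extensionality; intro X. rewrite IHA. f_equal.
    apply functional_extensionality; intro n. unfold del, scons.
    destruct n; simpl; auto.
Qed.

Definition drop (k : nat) (eta : tenv W V) : tenv W V := fun n => eta (n + k).

Lemma F0_liftn : forall k B eta, F0 (liftn k B) eta = F0 B (drop k eta).
Proof.
  induction k; intros B eta; simpl.
  - f_equal. apply functional_extensionality; intro n. unfold drop; rewrite Nat.add_0_r; auto.
  - rewrite F0_lift, IHk. f_equal. apply functional_extensionality; intro n.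
    unfold drop, del. simpl. f_equal; lia.
Qed.

Definition ins (k : nat) (X : W -> V -> Prop) (eta : tenv W V) : tenv W V :=
  fun n => if n <? k then eta n else if n =? k then X else eta (pred n).

Lemma F0_subst : forall A k B eta,
  F0 (subst_at k B A) eta = F0 A (ins k (F0 B (drop k eta)) eta).
Proof.
  induction A; intros k B eta; simpl.
  - unfold ins.
    destruct (Nat.eqb_spec n k); destruct (Nat.ltb_spec n k); subst; try lia; simpl.
    + rewrite F0_liftn. auto.
    + destruct (Nat.ltb_spec k n); try lia; simpl; auto.
    + destruct (Nat.ltb_spec k n); try lia; simpl; auto.
  - rewrite IHA1, IHA2; auto.
  - rewrite IHA; auto.
  - f_equal. apply functional_extensionality; intro X. rewrite IHA. f_equal.
    apply functional_extensionality; intro n.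
    destruct n.
    + auto.
    + assert (E : (fun n0 => scons X eta (n0 + S k)) = (fun n0 => eta (n0 + k))).
      { apply functional_extensionality; intro m. rewrite Nat.add_succ_r. auto. }
      change (ins (S k) (F0 B (fun n0 => scons X eta (n0 + S k))) (scons X eta) (S n) =
              scons X (ins k (F0 B (drop k eta)) eta) (S n)).
      rewrite E. unfold ins. cbn [scons].
      replace (S n <? S k) with (n <? k) by reflexivity.
      replace (S n =? S k) with (n =? k) by reflexivity.
      destruct (Nat.ltb_spec n k); [reflexivity|].
      destruct (Nat.eqb_spec n k); [reflexivity|].
      destruct n; [lia|]. reflexivity.
Qed.

Lemma F0_subst0 : forall A B eta, F0 (subst0 B A) eta = F0 A (scons (F0 B eta) eta).
Proof.
  intros. unfold subst0. rewrite F0_subst. f_equal.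
  apply functional_extensionality; intro n. unfold ins, scons, drop.
  destruct n; simpl.
  - f_equal. apply functional_extensionality; intro m. rewrite Nat.add_0_r; auto.
  - auto.
Qed.

Lemma fix_exists : forall Phi : (W -> V -> Prop) -> (W -> V -> Prop),
  (forall S1 S2 p, (forall q, ct p q -> S1 q = S2 q) -> Phi S1 p = Phi S2 p) ->
  exists S, S = Phi S.
Proof.
  intros Phi Hc.
  set (G := fun (x : W) (h : forall y, ct x y -> V -> Prop) =>
              Phi (fun y u => exists H : ct x y, h y H u) x).
  set (S := Fix Hwf (fun _ => V -> Prop) G).
  exists S. apply functional_extensionality; intro x.
  unfold S. rewrite Fix_eq.
  - unfold G. apply Hc. intros q Hq. apply functional_extensionality; intro u.
    apply propositional_extensionality; split.
    + intros [_ H]; exact H.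
    + intros H; exists Hq; exact H.
  - intros x0 f g Hfg. unfold G. f_equal.
    apply functional_extensionality; intro y. apply functional_extensionality; intro u.
    apply propositional_extensionality; split; intros [H1 H2]; exists H1;
      [rewrite <- Hfg | rewrite Hfg]; auto.
Qed.

Lemma fixS_spec : forall Phi, (exists S, S = Phi S) -> fixS Phi = Phi (fixS Phi).
Proof. intros Phi H. unfold fixS. apply (epsilon_spec (inhabits (fun (_:W) (_:V) => False)) (fun S => S = Phi S)). auto. Qed.

Lemma crt_cases : forall p q, crt p q -> p = q \/ ct p q.
Proof.
  intros p q H; induction H.
  - right; apply t_step; auto.
  - left; auto.
  - destruct IHclos_refl_trans1 as [->|H1]; auto.
    destruct IHclos_refl_trans2 as [->|H2]; auto.
    right; eapply t_trans; eauto.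
Qed.

Lemma ct_crt : forall p q, ct p q -> crt p q.
Proof. intros p q H; induction H; [apply rt_step|eapply rt_trans]; eauto. Qed.

Lemma crt_ct_ct : forall p q r, crt p q -> ct q r -> ct p r.
Proof. intros p q r H1 H2. destruct (crt_cases _ _ H1) as [->|H]; auto. eapply t_trans; eauto. Qed.

Lemma ct_crt_ct : forall p q r, ct p q -> crt q r -> ct p r.
Proof. intros p q r H1 H2. destruct (crt_cases _ _ H2) as [->|H]; auto. eapply t_trans; eauto. Qed.

Definition Inv (eta : tenv W V) (ctx : list bool) (p : W) : Prop :=
  forall k, k < length ctx ->
    (forall q, ct p q -> forall u, eta k q u) /\
    (nth k ctx false = true -> forall u, eta k p u).

Lemma Inv_mono : forall eta ctx p q, Inv eta ctx p -> crt p q -> Inv eta ctx q.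
Proof.
  intros eta ctx p q H Hpq k Hk. destruct (H k Hk) as [H1 H2]. split.
  - intros q' Hq'. apply H1. eapply crt_ct_ct; eauto.
  - intros Hn. destruct (crt_cases _ _ Hpq) as [<-|Hc]; auto.
Qed.

Definition AG (A : ty) := forall p eta1 eta2,
  (forall y, (forall q, crt p q -> eta1 y q = eta2 y q) \/
             (proper A y /\ forall q, ct p q -> eta1 y q = eta2 y q)) ->
  F0 A eta1 p = F0 A eta2 p.

Definition TVP (A : ty) := forall ctx eta p, tv_check A ctx = true -> Inv eta ctx p ->
  forall u, F0 A eta p u.

Lemma contr_of_AG : forall A, AG A -> proper A 0 -> forall eta X1 X2 p,
  (forall q, ct p q -> X1 q = X2 q) -> F0 A (scons X1 eta) p = F0 A (scons X2 eta) p.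
Proof.
  intros A HA Hp eta X1 X2 p H. apply HA. intros [|y].
  - right; split; auto.
  - left; intros; reflexivity.
Qed.

Lemma fixOK_of_AG : forall A, AG A -> proper A 0 -> forall eta,
  fixS (fun S => F0 A (scons S eta)) = F0 A (scons (fixS (fun S => F0 A (scons S eta))) eta).
Proof.
  intros A HA Hp eta. apply (fixS_spec (fun S => F0 A (scons S eta))).
  apply fix_exists. intros. apply contr_of_AG; auto.
Qed.

Lemma all_ext : forall (P Q : W -> V -> Prop) p, (forall u, P p u) -> (forall u, Q p u) -> P p = Q p.
Proof.
  intros. apply functional_extensionality; intro u. apply propositional_extensionality; split; auto.
Qed.

Lemma Inv_nil : forall eta p, Inv eta [] p.
Proof. intros eta p k Hk; simpl in Hk; lia. Qed.

Lemma main_sem : forall A, is_type A -> AG A /\ TVP A.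
Proof.
  intros A HA; induction HA as [n|A B HA [AGA TVA] HB [AGB TVB]|A HA [AGA TVA]|A HA [AGA TVA] Hp].
  - split.
    + intros p eta1 eta2 H. destruct (H n) as [H1|[H1 _]].
      * apply H1, rt_refl.
      * simpl in H1; congruence.
    + intros ctx eta p Ht Hi u. simpl in Ht. apply nth_true_lt in Ht as Hl.
      exact (proj2 (Hi n Hl) Ht u).
  - assert (TVP (TArr A B)) as TV.
    { intros ctx eta p Ht Hi u. simpl in Ht. simpl. intros q Hq v Hv.
      eapply TVB; eauto. eapply Inv_mono; eauto. }
    split; auto.
    intros p eta1 eta2 H.
    destruct (top_variant B) eqn:Etv.
    + rewrite top_variant_eq in Etv.
      apply all_ext; intro u; apply (TV []); simpl; auto; apply Inv_nil.
    + assert (E : forall q, crt p q -> F0 A eta1 q = F0 A eta2 q /\ F0 B eta1 q = F0 B eta2 q).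
      { intros q Hq. destruct (crt_cases _ _ Hq) as [<-|Hc].
        - split; [apply AGA|apply AGB]; intros y; destruct (H y) as [H1|[[[H2 H3]|H2] H4]];
            try (left; exact H1); try (right; split; assumption); congruence.
        - split; [apply AGA|apply AGB]; intros y; left; intros q' Hq';
            destruct (H y) as [H1|[_ H4]].
          all: try (apply H1; apply ct_crt; eapply ct_crt_ct; eauto).
          all: apply H4; eapply ct_crt_ct; eauto. }
      simpl. apply functional_extensionality; intro u.
      apply propositional_extensionality; split; intros Hf q Hq v Hv;
        destruct (E q Hq) as [E1 E2].
      * rewrite <- E2. apply Hf; auto. rewrite E1; auto.
      * rewrite E2. apply Hf; auto. rewrite <- E1; auto.
  - split.
    + intros p eta1 eta2 H. simpl.
      assert (E : forall q, R p q -> F0 A eta1 q = F0 A eta2 q).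
      { intros q Hq. apply AGA. intros y; left; intros q' Hq'.
        assert (Hct : ct p q') by (eapply ct_crt_ct; [apply t_step; eauto|exact Hq']).
        destruct (H y) as [H1|[_ H4]]; [apply H1, ct_crt, Hct|apply H4, Hct]. }
      apply functional_extensionality; intro u; apply propositional_extensionality;
        split; intros Hf q Hq; [rewrite <- E|rewrite E]; auto.
    + intros ctx eta p Ht Hi u; simpl in Ht; simpl; intros q Hq.
      apply (TVA (map (fun _ => true) ctx)); auto.
      intros k Hk; rewrite length_map in Hk; destruct (Hi k Hk) as [H1 H2]; split.
      * intros q' Hq'; apply H1; eapply t_trans; [apply t_step; eauto| eauto].
      * intros _; apply H1; apply t_step; auto.
  - assert (FX : forall eta, fixS (fun S => F0 A (scons S eta)) = F0 A (scons (fixS (fun S => F0 A (scons S eta))) eta)) by (intros; apply fixOK_of_AG; auto).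
    assert (TV : TVP (TMu A)).
    { intros ctx eta p Ht Hi. simpl in Ht. simpl.
      remember (fixS (fun S => F0 A (scons S eta))) as X eqn:EX.
      assert (EX2 : X = F0 A (scons X eta)) by (subst X; apply FX).
      assert (forall q, crt p q -> forall u, X q u).
      { intros q; induction q as [q IH] using (well_founded_ind Hwf). intros Hpq u.
        rewrite EX2. apply (TVA (false :: ctx)); auto.
        intros [|k] Hk; simpl in Hk.
        - split; [|discriminate]. intros q' Hq' u'. apply IH; auto. apply ct_crt. eapply crt_ct_ct; eauto.
        - assert (Hk' : k < length ctx) by lia. destruct (Inv_mono _ _ _ _ Hi Hpq k Hk') as [H1 H2]. split; auto. }
      intros u; apply H, rt_refl. }
    split; auto.
    intros p eta1 eta2 H.
    destruct (top_variant (TMu A)) eqn:Etv.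
    + rewrite top_variant_eq in Etv. apply all_ext; intro u; apply (TV []); auto; apply Inv_nil.
    + simpl.
      remember (fixS (fun S => F0 A (scons S eta1))) as X1 eqn:EX1.
      remember (fixS (fun S => F0 A (scons S eta2))) as X2 eqn:EX2.
      assert (E1 : X1 = F0 A (scons X1 eta1)) by (subst X1; apply FX).
      assert (E2 : X2 = F0 A (scons X2 eta2)) by (subst X2; apply FX).
      assert (HX : forall q, crt p q -> X1 q = X2 q).
      { intros q; induction q as [q IH] using (well_founded_ind Hwf). intros Hpq.
        rewrite E1, E2. apply AGA. intros [|y].
        - right. split; auto. intros q' Hq'. apply IH; auto. apply ct_crt; eapply crt_ct_ct; eauto.
        - cbn [scons]. destruct (H y) as [H1|[H2 H4]].
          + left. intros q' Hq'. apply H1. eapply rt_trans; eauto.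
          + simpl in H2. destruct H2 as [H2|H2]; [|congruence].
            destruct (crt_cases _ _ Hpq) as [<-|Hc].
            * right; split; auto.
            * left. intros q' Hq'. apply H4. eapply ct_crt_ct; eauto. }
      apply HX, rt_refl.
Qed.

Lemma F0_spec : interp_spec R app (fun eta p A => F0 A eta p).
Proof.
  intros eta Heta p A HA. destruct (main_sem A HA) as [AGA TVA]. split.
  - intros Htv u. rewrite top_variant_eq in Htv. apply (TVA []); auto; apply Inv_nil.
  - intros Htv. destruct A as [n|A1 A2|A1|A1]; try (intros u; apply iff_refl).
    rewrite F0_subst0.
    inversion HA; subst. destruct (main_sem A1 H0) as [AG1 _].
    pose proof (fixOK_of_AG A1 AG1 H1 eta) as E.
    change (fixS (fun S => F0 A1 (scons S eta))) with (F0 (TMu A1) eta) in E.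
    change (F0 (TMu A1) eta p u <-> F0 A1 (scons (F0 (TMu A1) eta) eta) p u).
    rewrite <- E. apply iff_refl.
Qed.

Lemma F0_cong : forall A B, ty_cong A B -> forall eta, F0 A eta = F0 B eta.
Proof.
  intros A B H; induction H; intros eta.
  - reflexivity.
  - symmetry; auto.
  - rewrite IHty_cong1; auto.
  - simpl; rewrite IHty_cong; auto.
  - simpl; rewrite IHty_cong1, IHty_cong2; auto.
  - assert (HT : is_type Top) by (constructor; [constructor; constructor|exact I]).
    destruct (main_sem (TArr A Top) (is_type_arr _ _ H HT)) as [_ T1].
    destruct (main_sem Top HT) as [_ T2].
    apply functional_extensionality; intro p; apply all_ext.
    + intro u; apply (T1 []); [reflexivity|apply Inv_nil].
    + intro u; apply (T2 []); [reflexivity|apply Inv_nil].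
  - rewrite F0_subst0. inversion H; subst. destruct (main_sem A H1) as [AG1 _].
    pose proof (fixOK_of_AG A AG1 H2 eta) as E.
    change (fixS (fun S => F0 A (scons S eta))) with (F0 (TMu A) eta) in E.
    exact E.
  - assert (EA : F0 A eta = F0 C (scons (F0 A eta) eta)) by (rewrite <- F0_subst0; apply IHty_cong).
    destruct (main_sem C H) as [AGC _].
    pose proof (fixOK_of_AG C AGC H0 eta) as EX.
    change (fixS (fun S => F0 C (scons S eta))) with (F0 (TMu C) eta) in EX.
    apply functional_extensionality; intro p.
    induction p as [p IH] using (well_founded_ind Hwf).
    rewrite EA, EX. apply contr_of_AG; auto.
Qed.

Lemma uniq : forall F, interp_spec R app F -> forall eta, hereditary R eta ->
  forall p A, is_type A -> forall u, F eta p A u <-> F0 A eta p u.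
Proof.
  intros F HF eta Heta p. induction p as [p IHp] using (well_founded_ind Hwf).
  assert (Hn : forall n A, hm A < n -> is_type A -> forall u, F eta p A u <-> F0 A eta p u).
  { induction n as [|n IHn]; intros A Hh HA u; [lia|].
    destruct (HF eta Heta p A HA) as [Ht Hnt].
    destruct (F0_spec eta Heta p A HA) as [Ht0 Hnt0].
    destruct (top_variant A) eqn:Etv.
    { split; intros _; [apply Ht0|apply Ht]; auto. }
    specialize (Hnt eq_refl). specialize (Hnt0 eq_refl).
    destruct A as [x|A1 A2|A1|A1]; inversion HA; subst.
    - rewrite (Hnt u). simpl. reflexivity.
    - rewrite (Hnt u). simpl.
      change (top_variant A2 = false) in Etv.
      cbn [hm] in Hh. rewrite Etv in Hh.
      assert (E : forall q, clos_refl_trans W R p q ->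
        (forall v, F eta q A1 v <-> F0 A1 eta q v) /\ (forall v, F eta q A2 v <-> F0 A2 eta q v)).
      { intros q Hq. destruct (crt_cases _ _ Hq) as [<-|Hc].
        - split; intro v; apply IHn; auto; lia.
        - split; intro v; apply IHp; auto. }
      split; intros Hf q Hq v Hv; destruct (E q Hq) as [E1 E2].
      + apply E2, Hf, E1; auto.
      + apply E2, Hf, E1; auto.
    - rewrite (Hnt u). simpl. split; intros Hf q Hq.
      + apply IHp; [apply t_step; auto|auto|apply Hf; auto].
      + apply IHp; [apply t_step; auto|auto|apply Hf; auto].
    - rewrite (Hnt u).
      cbn [hm] in Hh. rewrite Etv in Hh.
      pose proof (hm_subst A1 0 (TMu A1) H1) as Hs.
      rewrite (IHn (subst0 (TMu A1) A1)); [| unfold subst0; lia | apply is_type_subst; auto].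
      rewrite (Hnt0 u). reflexivity. }
  intros A HA u. apply (Hn (S (hm A))); auto.
Qed.

Lemma final_sem : (exists F, interp_spec R app F) /\
  (forall F, interp_spec R app F -> forall A B, ty_cong A B ->
     forall eta, hereditary R eta -> forall p u, F eta p A u <-> F eta p B u).
Proof.
  split.
  - exists (fun eta p A => F0 A eta p). apply F0_spec.
  - intros F HF A B H eta Heta p u.
    destruct (cong_types A B H) as [HA HB].
    rewrite (uniq F HF eta Heta p A HA u), (uniq F HF eta Heta p B HB u).
    rewrite (F0_cong A B H eta). reflexivity.
Qed.
End Sem.

Theorem theorem4 :
  forall (W : Type) (R : W -> W -> Prop) (V : Type) (app : V -> V -> V)
         (den : lterm -> (nat -> V) -> V),
    syntactical_lambda_algebra V app den ->
    well_founded_frame W R ->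
    (exists F, interp_spec R app F) /\
    (forall F, interp_spec R app F ->
       forall A B, ty_cong A B ->
       forall (eta : tenv W V), hereditary R eta ->
       forall (p : W) (u : V), F eta p A u <-> F eta p B u).
Proof.
  intros W R V app den _ Hf. apply (final_sem W V R app (frame_wf W R Hf)).
Qed.
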